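(* Let $x\in(0,1)$ be irrational. Every principal convergent of the OOCF expansion of $x$ is an intermediate convergent of the regular continued fraction of $x$; that is, for every $k\ge1$ there exist $n\ge1$ and $1\le j\le d_n$ with $p_k/q_k=\frac{p^R_{n-2}+jp^R_{n-1}}{q^R_{n-2}+jq^R_{n-1}}$.
   Context: Regular continued fraction (RCF): $x=[0;d_1,d_2,\dots]=\cfrac{1}{d_1+\cfrac{1}{d_2+\cdots}}$, $d_j\in\mathbb N$; convergents $p^R_n/q^R_n$ defined by $p^R_{-1}=1$, $q^R_{-1}=0$, $p^R_0=0$, $q^R_0=1$, $p^R_n=d_np^R_{n-1}+p^R_{n-2}$, $q^R_n=d_nq^R_{n-1}+q^R_{n-2}$. Intermediate convergents: $\frac{p^R_{n-2}+jp^R_{n-1}}{q^R_{n-2}+jq^R_{n-1}}$ for $n\ge1$, $1\le j\le d_n$. OOCF: digits $D=\{(1,1)\}\cup\{(a,\varepsilon):a\ge2,\ \varepsilon=\pm1\}$; $B(k+1,-1)=[\frac{k-1}{k},\frac{2k-1}{2k+1}]$, $B(k,1)=[\frac{2k-1}{2k+1},\frac{k}{k+1}]$ ($k\ge1$); $T(x)=\frac{kx-(k-1)}{k-(k+1)x}$ on $B(k+1,-1)$, $T(x)=\frac{k-(k+1)x}{kx-(k-1)}$ on $B(k,1)$, $T(1)=1$. The OOCF expansion of irrational $x\in(0,1)$ is the unique sequence $(a_n,\varepsilon_n)\in D$ with $T^{n-1}(x)\in B(a_n,\varepsilon_n)$ for all $n\ge1$; its $k$-th principal convergent is $p_k/q_k=1-\cfrac{1}{a_1+\cfrac{\varepsilon_1}{2-\cfrac{1}{\ddots\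 \cfrac{\varepsilon_{k-1}}{2-\cfrac{1}{a_k+\varepsilon_k/2}}}}}$. *)

(* Defs.v *)
From Stdlib Require Import Reals Lra Lia ZArith.
Open Scope R_scope.

Definition irrational (x : R) : Prop :=
  ~ exists p q : Z, q <> 0%Z /\ x = IZR p / IZR q.

(* Gauss map G(y) = 1/y - floor(1/y); Int_part is the floor on non-integers. *)
Definition gauss (y : R) : R := / y - IZR (Int_part (/ y)).

Definition rcf_digit (x : R) (n : nat) : Z :=
  Int_part (/ (Nat.iter (n - 1) gauss x)).

(* Shifted convergent numerators/denominators:
   rcfP x m = p^R_{m-1},  rcfQ x m = q^R_{m-1}   (m >= 0). *)
Fixpoint rcfPQ (x : R) (m : nat) : Z * Z :=
  match m with
  | O => (1%Z, 0%Z)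
  | S O => (0%Z, 1%Z)
  | S ((S m') as m1) =>
      let (p1, q1) := rcfPQ x m1 in
      let (p0, q0) := rcfPQ x m' in
      (rcf_digit x m1 * p1 + p0, rcf_digit x m1 * q1 + q0)%Z
  end.
Definition rcfP (x : R) (m : nat) : Z := fst (rcfPQ x m).
Definition rcfQ (x : R) (m : nat) : Z := snd (rcfPQ x m).

Definition oocf_digit (a : nat) (e : Z) : Prop :=
  (a = 1%nat /\ e = 1%Z) \/ ((2 <= a)%nat /\ (e = 1%Z \/ e = (-1)%Z)).

Definition oocf_B (a : nat) (e : Z) (y : R) : Prop :=
  if Z.eqb e 1 then
    let k := INR a in (2*k-1)/(2*k+1) <= y <= k/(k+1)
  else
    let k := INR a - 1 in (k-1)/k <= y <= (2*k-1)/(2*k+1).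

Definition oocf_T_branch (a : nat) (e : Z) (y : R) : R :=
  if Z.eqb e 1 then
    let k := INR a in (k - (k+1)*y) / (k*y - (k-1))
  else
    let k := INR a - 1 in (k*y - (k-1)) / (k - (k+1)*y).

Fixpoint oocf_tail (a : nat -> nat) (e : nat -> Z) (i m : nat) : R :=
  match m with
  | O => INR (a i) + IZR (e i) / 2
  | S m' => INR (a i) + IZR (e i) / (2 - / oocf_tail a e (S i) m')
  end.

Definition oocf_conv (a : nat -> nat) (e : nat -> Z) (k : nat) : R :=
  1 - / oocf_tail a e 1 (k - 1).

(* Main.v *)
Require Import Defs.
From Stdlib Require Import Reals Lra Lia ZArith.
Open Scope R_scope.


Lemma rat_not_irr (p q : Z) : irrational (IZR p / IZR q) -> False.
Proof.
  intros H. apply H. destruct (Z.eq_dec q 0) as [->|Hq].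
  - exists 0%Z, 1%Z. split; [lia|]. rewrite Rdiv_0_r. unfold Rdiv. rewrite Rmult_0_l. reflexivity.
  - exists p, q. split; auto.
Qed.

Lemma irr_ne (x : R) (z : Z) : irrational x -> x <> IZR z.
Proof. intros H E. apply (rat_not_irr z 1). rewrite <- E. unfold Rdiv. rewrite Rinv_1, Rmult_1_r. exact H. Qed.

Lemma gauss_prop (x : R) : 0 < x < 1 -> irrational x ->
  0 < gauss x < 1 /\ irrational (gauss x) /\ (1 <= Int_part (/ x))%Z.
Proof.
  intros Hx Hi. destruct (base_Int_part (/ x)) as [H1 H2].
  assert (Hinv : / x > 1).
  { rewrite <- Rinv_1. apply Rinv_lt_contravar; lra. }
  assert (Hd : (1 <= Int_part (/ x))%Z).
  { apply le_IZR. assert (0 < IZR (Int_part (/ x))) by lra.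
    apply lt_IZR in H. apply IZR_le. lia. }
  unfold gauss.
  assert (Hirr : irrational (/ x - IZR (Int_part (/ x)))).
  { intros [p [q [Hq E]]]. apply Hi.
    set (k := Int_part (/ x)) in *.
    assert (Hq' : IZR q <> 0) by (apply not_0_IZR; auto).
    assert (E2 : / x = (IZR p + IZR k * IZR q) / IZR q).
    { assert (E3 : / x = IZR p / IZR q + IZR k) by lra. rewrite E3. field. auto. }
    exists q, (p + k * q)%Z. split.
    - intro Hz. rewrite <- mult_IZR, <- plus_IZR, Hz in E2. rewrite Rdiv_0_l in E2. lra.
    - rewrite plus_IZR, mult_IZR.
      assert (IZR p + IZR k * IZR q <> 0).
      { intro Hz. rewrite Hz in E2. rewrite Rdiv_0_l in E2. lra. }
      rewrite <- (Rinv_inv x), E2. field. split; auto. }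
  split; [|split; auto].
  split.
  - destruct (Req_dec (/ x - IZR (Int_part (/ x))) 0) as [E|E].
    + exfalso. apply (irr_ne _ 0 Hirr). rewrite E. reflexivity.
    + lra.
  - lra.
Qed.

Lemma iter_prop (x : R) : 0 < x < 1 -> irrational x ->
  forall n, 0 < Nat.iter n gauss x < 1 /\ irrational (Nat.iter n gauss x).
Proof.
  intros Hx Hi n. induction n as [|n IH]; simpl; auto.
  destruct IH as [A B]. destruct (gauss_prop _ A B) as [C [D _]]. auto.
Qed.

Lemma digit_ge1 (x : R) : 0 < x < 1 -> irrational x -> forall n, (1 <= rcf_digit x n)%Z.
Proof.
  intros Hx Hi n. unfold rcf_digit. destruct (iter_prop x Hx Hi (n-1)) as [A B].
  destruct (gauss_prop _ A B) as [_ [_ C]]. exact C.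
Qed.

Lemma iter_swap (f : R -> R) (n : nat) (x : R) : Nat.iter n f (f x) = Nat.iter (S n) f x.
Proof. induction n; simpl; auto. simpl in IHn. rewrite IHn. reflexivity. Qed.

Lemma digit_shift (x : R) (n : nat) : (1 <= n)%nat -> rcf_digit x (S n) = rcf_digit (gauss x) n.
Proof.
  intros Hn. unfold rcf_digit. replace (S n - 1)%nat with (S (n-1)) by lia.
  rewrite iter_swap. reflexivity.
Qed.

Lemma rcfPQ_SS (x : R) (m : nat) : rcfPQ x (S (S m)) =
  let (p1, q1) := rcfPQ x (S m) in let (p0, q0) := rcfPQ x m in
  (rcf_digit x (S m) * p1 + p0, rcf_digit x (S m) * q1 + q0)%Z.
Proof. reflexivity. Qed.

Lemma rcfP_SS (x : R) (m : nat) : rcfP x (S (S m)) = (rcf_digit x (S m) * rcfP x (S m) + rcfP x m)%Z.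
Proof. unfold rcfP. rewrite rcfPQ_SS. destruct (rcfPQ x (S m)), (rcfPQ x m). reflexivity. Qed.
Lemma rcfQ_SS (x : R) (m : nat) : rcfQ x (S (S m)) = (rcf_digit x (S m) * rcfQ x (S m) + rcfQ x m)%Z.
Proof. unfold rcfQ. rewrite rcfPQ_SS. destruct (rcfPQ x (S m)), (rcfPQ x m). reflexivity. Qed.

Lemma rcf_shift (x : R) (m : nat) :
  rcfP x (S m) = rcfQ (gauss x) m /\
  rcfQ x (S m) = (rcf_digit x 1 * rcfQ (gauss x) m + rcfP (gauss x) m)%Z.
Proof.
  assert (H : forall m, (rcfP x (S m) = rcfQ (gauss x) m /\
     rcfQ x (S m) = (rcf_digit x 1 * rcfQ (gauss x) m + rcfP (gauss x) m)%Z) /\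
     (rcfP x (S (S m)) = rcfQ (gauss x) (S m) /\
     rcfQ x (S (S m)) = (rcf_digit x 1 * rcfQ (gauss x) (S m) + rcfP (gauss x) (S m))%Z)).
  { clear m; intro m; induction m as [|m [[A B] [C D]]].
    - cbn [rcfP rcfQ]. rewrite !rcfP_SS, !rcfQ_SS. cbn. lia.
    - split; [split; auto|].
      rewrite (rcfP_SS x (S m)), (rcfQ_SS x (S m)), (rcfP_SS (gauss x) m), (rcfQ_SS (gauss x) m).
      rewrite digit_shift by lia. rewrite C, D, A, B. split; ring. }
  exact (proj1 (H m)).
Qed.

Lemma PQ_nonneg (x : R) : 0 < x < 1 -> irrational x -> forall m,
  (0 <= rcfP x m)%Z /\ (0 <= rcfP x (S m))%Z /\ (0 <= rcfQ x m)%Z /\ (1 <= rcfQ x (S m))%Z.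
Proof.
  intros Hx Hi m. induction m as [|m IH].
  - cbn. lia.
  - destruct IH as [A [B [C D]]]. rewrite rcfP_SS, rcfQ_SS.
    pose proof (digit_ge1 x Hx Hi (S m)). nia.
Qed.

Definition IC (x c : R) : Prop :=
  exists n j : nat,
      (1 <= n)%nat /\ (1 <= j)%nat /\ (Z.of_nat j <= rcf_digit x n)%Z /\
      c = (IZR (rcfP x (n - 1)) + INR j * IZR (rcfP x n)) /
        (IZR (rcfQ x (n - 1)) + INR j * IZR (rcfQ x n)).

Lemma IC_base (x : R) (z : Z) : (1 <= z <= rcf_digit x 1)%Z -> IC x (1 / IZR z).
Proof.
  intros Hz. exists 1%nat, (Z.to_nat z). split; [lia|]. split; [lia|].
  rewrite Z2Nat.id by lia. split; [lia|].
  rewrite INR_IZR_INZ, Z2Nat.id by lia. cbn.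
  rewrite Rmult_0_r, Rmult_1_r, Rplus_0_r, Rplus_0_l. reflexivity.
Qed.

Lemma IC_rec (x c : R) : 0 < x < 1 -> irrational x ->
  IC (gauss x) c -> IC x (/ (IZR (rcf_digit x 1) + c)).
Proof.
  intros Hx Hi [n [j [Hn [Hj [Hjd Hc]]]]].
  destruct (gauss_prop x Hx Hi) as [Hg [Hgi _]].
  exists (S n), j. split; [lia|]. split; [lia|].
  rewrite digit_shift by lia. split; auto.
  destruct n as [|m]; [lia|].
  replace (S (S m) - 1)%nat with (S m) by lia.
  replace (S m - 1)%nat with m in Hc by lia.
  destruct (rcf_shift x m) as [A B]. destruct (rcf_shift x (S m)) as [C D].
  rewrite A, B, C, D, Hc.
  destruct (PQ_nonneg _ Hg Hgi m) as [P0 [P1 [Q0 Q1]]].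
  pose proof (digit_ge1 x Hx Hi 1) as Hd.
  rewrite !plus_IZR, !mult_IZR.
  set (d := IZR (rcf_digit x 1)).
  assert (1 <= d) by (apply IZR_le in Hd; exact Hd).
  apply IZR_le in P0, P1, Q0, Q1.
  assert (1 <= INR j) by (apply (le_INR 1); lia).
  assert (IZR (rcfQ (gauss x) m) + INR j * IZR (rcfQ (gauss x) (S m)) > 0) by nra.
  assert (IZR (rcfP (gauss x) m) + INR j * IZR (rcfP (gauss x) (S m)) >= 0) by nra.
  field. split; nra.
Qed.

Definition mob (A B C D : Z) (t : R) : R := (IZR A * t + IZR B) / (IZR C * t + IZR D).
Definition good (A B C D : Z) : Prop :=
  (0 <= A)%Z /\ (0 <= B)%Z /\ (0 <= C)%Z /\ (0 <= D)%Z /\ (A*D - B*C = 1 \/ A*D - B*C = -1)%Z.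

Lemma lin_pos (A B : Z) (t : R) : (0 <= A)%Z -> (0 <= B)%Z -> (1 <= A + B)%Z -> 0 < t ->
  0 < IZR A * t + IZR B.
Proof.
  intros HA HB HAB Ht. destruct (Z.eq_dec A 0) as [->|HA'].
  - rewrite Rmult_0_l, Rplus_0_l. apply IZR_lt. lia.
  - assert (1 <= IZR A) by (apply IZR_le; lia). assert (0 <= IZR B) by (apply IZR_le; lia). nra.
Qed.

Lemma good_sums A B C D : good A B C D -> (1 <= A + B)%Z /\ (1 <= C + D)%Z.
Proof. intros [HA [HB [HC [HD Hdet]]]]. split; nia. Qed.

Lemma key (S : nat) : forall x A B C D t, (A + B + C + D <= Z.of_nat S)%Z ->
  0 < x < 1 -> irrational x -> good A B C D -> 0 < t -> x = mob A B C D t ->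
  IC x (mob A B C D 1).
Proof.
  induction S as [|S IH]; intros x A B C D t Hsum Hx Hi Hg Ht Ex.
  - exfalso. destruct (good_sums _ _ _ _ Hg). destruct Hg as [? [? [? [? _]]]]. lia.
  - destruct (good_sums _ _ _ _ Hg) as [HAB HCD].
    pose proof Hg as [HA [HB [HC [HD Hdet]]]].
    destruct (gauss_prop x Hx Hi) as [Hgx [Hgi Hd1]].
    set (d := rcf_digit x 1).
    assert (Hd : (1 <= d)%Z) by exact Hd1.
    assert (Hgdef : gauss x = / x - IZR d) by reflexivity.
    pose proof (lin_pos A B t HA HB HAB Ht) as PN.
    pose proof (lin_pos C D t HC HD HCD Ht) as PD.
    set (u := (C - d * A)%Z). set (v := (D - d * B)%Z).
    assert (Eg : gauss x = mob u v A B t).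
    { rewrite Hgdef, Ex. unfold mob, u, v. rewrite !minus_IZR, !mult_IZR. field. lra. }
    assert (Hdet' : (u * B - v * A = 1 \/ u * B - v * A = -1)%Z).
    { unfold u, v. destruct Hdet as [E|E]; [right|left]; lia. }
    destruct (Z_le_dec 0 u) as [Hu|Hu]; [destruct (Z_le_dec 0 v) as [Hv|Hv]|].
    +
      assert (Hg' : good u v A B) by (repeat split; auto).
      assert (Hc : mob A B C D 1 = / (IZR d + mob u v A B 1)).
      { unfold mob, u, v. rewrite !minus_IZR, !mult_IZR.
        assert (1 <= IZR (A + B)) by (apply IZR_le; lia).
        assert (1 <= IZR (C + D)) by (apply IZR_le; lia).
        rewrite !plus_IZR in *. field. split; lra. }
      rewrite Hc. apply IC_rec; auto.
      apply (IH (gauss x) u v A B t); auto.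
      unfold u, v. nia.
    +
      assert (Hpos : 0 < IZR u * t + IZR v).
      { destruct Hgx as [Hgx _]. rewrite Eg in Hgx. unfold mob in Hgx.
        apply (Rmult_lt_compat_r (IZR A * t + IZR B)) in Hgx; auto.
        unfold Rdiv in Hgx. rewrite Rmult_assoc, Rinv_l, Rmult_1_r, Rmult_0_l in Hgx; lra. }
      assert (Hu' : (0 < u)%Z).
      { apply lt_IZR. assert (IZR v <= -1) by (apply IZR_le; lia).
        destruct (Rle_lt_dec (IZR u) 0); [nra|auto]. }
      assert (A = 0 /\ B = 1 /\ u = 1)%Z as [EA [EB Eu]].
      { destruct Hdet' as [E|E]; [|nia].
        assert (v * A = 0 \/ v * A < 0)%Z as [E1|E1] by nia; [|nia].
        assert (A = 0)%Z by nia. subst A. split; [auto|]. nia. }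
      unfold u in Eu. subst A B.
      assert (HDd : (0 <= D <= d - 1)%Z) by (unfold v in Hv; lia).
      replace (mob 0 1 C D 1) with (1 / IZR (D + 1)).
      * apply IC_base. lia.
      * unfold mob. rewrite plus_IZR. replace C with 1%Z by lia. simpl (IZR 0). simpl (IZR 1).
        assert (0 <= IZR D) by (apply IZR_le; lia). field. lra.
    +
      assert (Hpos : 0 < IZR u * t + IZR v).
      { destruct Hgx as [Hgx _]. rewrite Eg in Hgx. unfold mob in Hgx.
        apply (Rmult_lt_compat_r (IZR A * t + IZR B)) in Hgx; auto.
        unfold Rdiv in Hgx. rewrite Rmult_assoc, Rinv_l, Rmult_1_r, Rmult_0_l in Hgx; lra. }
      assert (Hv' : (0 < v)%Z).
      { apply lt_IZR. assert (IZR u <= -1) by (apply IZR_le; lia). nra. }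
      assert (B = 0 /\ A = 1 /\ v = 1)%Z as [EB [EA Ev]].
      { destruct Hdet' as [E|E]; [nia|].
        assert (u * B = 0 \/ u * B < 0)%Z as [E1|E1] by nia.
        - assert (B = 0)%Z by nia. subst B. split; [auto|]. nia.
        - exfalso. assert (u * B = -1 /\ v * A = 0)%Z as [E2 E3] by nia.
          assert (A = 0)%Z by nia. unfold u in Hu. nia. }
      unfold v in Ev. subst A B.
      assert (HCd : (0 <= C <= d - 1)%Z) by (unfold u in Hu; lia).
      replace (mob 1 0 C D 1) with (1 / IZR (C + 1)).
      * apply IC_base. lia.
      * unfold mob. rewrite plus_IZR. replace D with 1%Z by lia. simpl (IZR 0). simpl (IZR 1).
        assert (0 <= IZR C) by (apply IZR_le; lia). field. lra.
Qed.

Definition bA (a : nat) (e : Z) : Z := (Z.of_nat a - 1)%Z.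
Definition bB (a : nat) (e : Z) : Z := if Z.eqb e 1 then Z.of_nat a else (Z.of_nat a - 2)%Z.
Definition bC (a : nat) (e : Z) : Z := Z.of_nat a.
Definition bD (a : nat) (e : Z) : Z := if Z.eqb e 1 then (Z.of_nat a + 1)%Z else (Z.of_nat a - 1)%Z.

Lemma branch_good a e : oocf_digit a e -> good (bA a e) (bB a e) (bC a e) (bD a e) /\ (1 <= bD a e)%Z.
Proof.
  unfold oocf_digit, good, bA, bB, bC, bD.
  intros [[-> ->]|[Ha [-> | ->]]]; simpl; lia.
Qed.

Lemma branch_inv a e y : oocf_digit a e -> oocf_B a e y ->
  mob (bA a e) (bB a e) (bC a e) (bD a e) (oocf_T_branch a e y) = y.
Proof.
  unfold oocf_digit, oocf_B, oocf_T_branch, mob, bA, bB, bC, bD.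
  intros [[-> ->]|[Ha [-> | ->]]]; simpl Z.eqb; cbv iota; rewrite ?minus_IZR, ?plus_IZR, <- ?INR_IZR_INZ.
  - simpl INR. intros [H1 H2]. 
    assert (1/3 <= y) by lra.
    field. repeat split; lra.
  - set (k := INR a) in *. assert (Hk : 2 <= k) by (unfold k; apply (le_INR 2); lia).
    intros [H1 H2].
    assert (H1' : 2*k-1 <= y * (2*k+1)).
    { apply (Rmult_le_compat_r (2*k+1)) in H1; [|lra]. unfold Rdiv in H1.
      rewrite Rmult_assoc, Rinv_l, Rmult_1_r in H1; lra. }
    assert (HD : k * y - (k - 1) > 0) by nra.
    field. split; [lra|]. intro Z0; ring_simplify in Z0; lra.
  - set (k := INR a - 1) in *. simpl (IZR 1); simpl (IZR 2).
    assert (Hk : 1 <= k) by (unfold k; assert (2 <= INR a) by (apply (le_INR 2); lia); lra).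
    intros [H1 H2].
    assert (H2' : y * (2*k+1) <= 2*k-1).
    { apply (Rmult_le_compat_r (2*k+1)) in H2; [|lra]. unfold Rdiv in H2.
      rewrite Rmult_assoc, Rinv_l, Rmult_1_r in H2; lra. }
    assert (HD : k - (k + 1) * y > 0) by nra.
    replace (INR a) with (k + 1) by (unfold k; ring).
    field. split; [lra|]. intro Z0; ring_simplify in Z0; lra.
Qed.

Lemma branch_tail a e c : oocf_digit a e -> 0 <= c ->
  1 - / (INR a + IZR e / (1 + c)) = mob (bA a e) (bB a e) (bC a e) (bD a e) c.
Proof.
  unfold oocf_digit, mob, bA, bB, bC, bD.
  intros [[-> ->]|[Ha [-> | ->]]] Hc; simpl Z.eqb; cbv iota; rewrite ?minus_IZR, ?plus_IZR, <- ?INR_IZR_INZ.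
  - simpl INR. field. repeat split; try lra.
  - assert (2 <= INR a) by (apply (le_INR 2); lia). simpl (IZR 1).
    field. repeat split; try lra. intro Z0. field_simplify in Z0; nra.
  - assert (2 <= INR a) by (apply (le_INR 2); lia). simpl (IZR 1); simpl (IZR 2).
    field. repeat split; try nra.
Qed.

Lemma mob_comp A B C D A' B' C' D' s :
  IZR C * s + IZR D <> 0 -> IZR C' * mob A B C D s + IZR D' <> 0 ->
  mob A' B' C' D' (mob A B C D s) =
  mob (A'*A + B'*C) (A'*B + B'*D) (C'*A + D'*C) (C'*B + D'*D) s.
Proof.
  intros H1 H2. unfold mob in *.
  assert (E : IZR C' * ((IZR A * s + IZR B) / (IZR C * s + IZR D)) + IZR D' =
     (IZR C' * (IZR A * s + IZR B) + IZR D' * (IZR C * s + IZR D)) / (IZR C * s + IZR D))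
    by (field; auto).
  assert (H3 : IZR C' * (IZR A * s + IZR B) + IZR D' * (IZR C * s + IZR D) <> 0).
  { intro Z0. rewrite Z0, Rdiv_0_l in E. auto. }
  rewrite !plus_IZR, !mult_IZR. field. split; auto.
  intro Z0. apply H3. rewrite <- Z0. ring.
Qed.

Lemma good_comp A B C D A' B' C' D' : good A B C D -> good A' B' C' D' ->
  good (A'*A + B'*C) (A'*B + B'*D) (C'*A + D'*C) (C'*B + D'*D).
Proof.
  intros [HA [HB [HC [HD H]]]] [HA' [HB' [HC' [HD' H']]]].
  repeat split; try nia.
Qed.

Lemma mob_nonneg A B C D s : good A B C D -> 0 < s -> 0 < mob A B C D s.
Proof.
  intros Hg Hs. destruct (good_sums _ _ _ _ Hg) as [H1 H2]. destruct Hg as [? [? [? [? _]]]].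
  unfold mob. apply Rdiv_lt_0_compat; apply lin_pos; auto.
Qed.

Lemma den_pos A B C D s : good A B C D -> 0 < s -> 0 < IZR C * s + IZR D.
Proof.
  intros Hg Hs. destruct (good_sums _ _ _ _ Hg) as [H1 H2]. destruct Hg as [? [? [? [? _]]]].
  apply lin_pos; auto.
Qed.

Lemma den_pos' (C D : Z) u : (0 <= C)%Z -> (1 <= D)%Z -> 0 <= u -> IZR C * u + IZR D <> 0.
Proof.
  intros HC HD Hu. assert (0 <= IZR C) by (apply IZR_le; auto).
  assert (1 <= IZR D) by (apply IZR_le; auto). nra.
Qed.

Section Chain.
Variables (x : R) (a : nat -> nat) (e : nat -> Z) (y : nat -> R).
Hypothesis Hx : 0 < x < 1.
Hypothesis Hi : irrational x.
Hypothesis Hy0 : y O = x.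
Hypothesis Hy : forall n : nat, (1 <= n)%nat ->
     oocf_digit (a n) (e n) /\
     oocf_B (a n) (e n) (y (n - 1)%nat) /\
     y n = oocf_T_branch (a n) (e n) (y (n - 1)%nat).

Lemma y_back n : (1 <= n)%nat ->
  y (n - 1)%nat = mob (bA (a n) (e n)) (bB (a n) (e n)) (bC (a n) (e n)) (bD (a n) (e n)) (y n).
Proof.
  intros Hn. destruct (Hy n Hn) as [Hd [HB Ht]]. rewrite Ht. symmetry. apply branch_inv; auto.
Qed.

Lemma mob_rat A B C D p q : (q <> 0)%Z ->
  exists P Q, mob A B C D (IZR p / IZR q) = IZR P / IZR Q.
Proof.
  intros Hq. assert (Hq' : IZR q <> 0) by (apply not_0_IZR; auto).
  exists (A*p + B*q)%Z, (C*p + D*q)%Z. unfold mob. rewrite !plus_IZR, !mult_IZR.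
  destruct (Req_dec (IZR C * IZR p + IZR D * IZR q) 0) as [Z0|Z0].
  - rewrite Z0, Rdiv_0_r.
    replace (IZR C * (IZR p / IZR q) + IZR D) with ((IZR C * IZR p + IZR D * IZR q) / IZR q)
      by (field; auto).
    rewrite Z0, Rdiv_0_l, Rdiv_0_r. reflexivity.
  - field. split; auto.
Qed.

Lemma y_irr n : irrational (y n).
Proof.
  induction n as [|n IH]; [rewrite Hy0; auto|].
  intros [p [q [Hq E]]].
  pose proof (y_back (S n) ltac:(lia)) as Eb. replace (S n - 1)%nat with n in Eb by lia.
  rewrite E in Eb.
  destruct (mob_rat (bA (a (S n)) (e (S n))) (bB (a (S n)) (e (S n)))
              (bC (a (S n)) (e (S n))) (bD (a (S n)) (e (S n))) p q Hq) as [P [Q E2]].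
  rewrite E2 in Eb. rewrite Eb in IH. exact (rat_not_irr P Q IH).
Qed.

Lemma y_pos n : 0 < y n.
Proof.
  destruct (Hy (S n) ltac:(lia)) as [Hd [HB _]].
  replace (S n - 1)%nat with n in HB by lia.
  assert (0 <= y n).
  { revert HB. unfold oocf_digit in Hd. unfold oocf_B.
    destruct Hd as [[-> ->]|[Ha [-> | ->]]]; simpl Z.eqb; cbv iota.
    - simpl INR. lra.
    - intros [H1 _]. assert (2 <= INR (a (S n))) by (apply (le_INR 2); lia).
      eapply Rle_trans; [|exact H1]. unfold Rdiv; apply Rmult_le_pos; [lra| left; apply Rinv_0_lt_compat; lra].
    - intros [H1 _]. assert (2 <= INR (a (S n))) by (apply (le_INR 2); lia).
      eapply Rle_trans; [|exact H1]. unfold Rdiv; apply Rmult_le_pos; [lra| left; apply Rinv_0_lt_compat; lra]. }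
  destruct (Req_dec (y n) 0) as [Z0|Z0]; [|lra].
  exfalso. apply (irr_ne _ 0 (y_irr n)). exact Z0.
Qed.

Lemma chain m : forall i, (1 <= i)%nat -> exists A B C D, good A B C D /\
  1 - / oocf_tail a e i m = mob A B C D 1 /\ y (i - 1)%nat = mob A B C D (y (i + m)%nat).
Proof.
  induction m as [|m IH]; intros i Hi1.
  - destruct (Hy i Hi1) as [Hd _]. destruct (branch_good _ _ Hd) as [Hg _].
    exists (bA (a i) (e i)), (bB (a i) (e i)), (bC (a i) (e i)), (bD (a i) (e i)).
    split; auto. split.
    + simpl. rewrite <- branch_tail by (auto; lra). replace (1 + 1) with 2 by ring. reflexivity.
    + rewrite Nat.add_0_r. apply y_back; auto.
  - destruct (IH (S i) ltac:(lia)) as [A [B [C [D [Hg [E1 E2]]]]]].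
    destruct (Hy i Hi1) as [Hd _]. destruct (branch_good _ _ Hd) as [Hb HbD].
    set (a' := bA (a i) (e i)). set (b' := bB (a i) (e i)).
    set (c' := bC (a i) (e i)). set (d' := bD (a i) (e i)).
    exists (a'*A + b'*C)%Z, (a'*B + b'*D)%Z, (c'*A + d'*C)%Z, (c'*B + d'*D)%Z.
    split; [apply good_comp; auto|].
    assert (Hc'0 : (0 <= c')%Z) by (destruct Hb as [? [? [? [? _]]]]; auto).
    split.
    + simpl. replace (2 - / oocf_tail a e (S i) m) with (1 + (1 - / oocf_tail a e (S i) m)) by ring.
      rewrite E1. pose proof (mob_nonneg A B C D 1 Hg ltac:(lra)).
      rewrite branch_tail by (auto; lra).
      apply mob_comp.
      * pose proof (den_pos A B C D 1 Hg ltac:(lra)). lra.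
      * apply den_pos'; auto; lra.
    + rewrite y_back by auto. replace (i - 1 + 1)%nat with i by lia.
      replace (S i - 1)%nat with i in E2 by lia.
      replace (S i + m)%nat with (i + S m)%nat in E2 by lia.
      rewrite E2. pose proof (y_pos (i + S m)).
      apply mob_comp.
      * pose proof (den_pos A B C D _ Hg H). lra.
      * apply den_pos'; auto. left. apply mob_nonneg; auto.
Qed.
End Chain.

(* (a n, e n)_{n>=1} is the OOCF expansion of x, with y n = T^n(x). *)
Theorem theorem5p2 (x : R) (a : nat -> nat) (e : nat -> Z) (y : nat -> R) :
  0 < x < 1 -> irrational x ->
  y O = x ->
  (forall n : nat, (1 <= n)%nat ->
     oocf_digit (a n) (e n) /\
     oocf_B (a n) (e n) (y (n - 1)%nat) /\
     y n = oocf_T_branch (a n) (e n) (y (n - 1)%nat)) ->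
  forall k : nat, (1 <= k)%nat ->
    exists n j : nat,
      (1 <= n)%nat /\ (1 <= j)%nat /\ (Z.of_nat j <= rcf_digit x n)%Z /\
      oocf_conv a e k =
        (IZR (rcfP x (n - 1)) + INR j * IZR (rcfP x n)) /
        (IZR (rcfQ x (n - 1)) + INR j * IZR (rcfQ x n)).
Proof.
  intros Hx Hi Hy0 Hy k Hk.
  destruct (chain x a e y Hx Hi Hy0 Hy (k - 1) 1 (le_n 1)) as [A [B [C [D [Hg [E1 E2]]]]]].
  replace (1 + (k - 1))%nat with k in E2 by lia. simpl in E2. rewrite Hy0 in E2.
  assert (H : IC x (mob A B C D 1)).
  { apply (key (Z.to_nat (A + B + C + D)) x A B C D (y k)); auto.
    - destruct Hg as [? [? [? [? _]]]]. lia.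
    - apply (y_pos x a e y Hx Hi Hy0 Hy). }
  unfold oocf_conv. rewrite E1. exact H.
Qed.
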